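(* Let $A=\{1,2,3\}\cup\{5\cdot 2^i : i\ge 0\}=\{1,2,3,5,10,20,40,\dots\}$. Then for every $n\ge 1$, $\mathrm{Total}(n,A)=\lfloor 5\cdot 2^{n-2}-1\rfloor$ (i.e., the values are $1,4,9,19,39,79,\dots$).
   Context: For an integer $n\ge 0$ and a set $A$ of positive integers with $1\in A$, the abstract generalized 2048 game $\mathrm{AGG}(n,A)$ is played on $n$ indistinguishable cells. A position assigns to each cell either nothing (empty) or a tile with a value in $A$; the initial position has all cells empty. A step, performable from any position with at least one empty cell, consists of: (i) placing a new tile of value $1$ into a chosen empty cell; then (ii) optionally choosing pairwise disjoint sets of nonempty cells, each with tile-value sum in $A$, and merging each set into a single tile of that sum placed in one of its cells, the other cells of the set becoming empty. The game ends when after a step all cells are nonempty. A position is reachable if obtainable from the initial position by finitely many steps; its total value is the sum of its tile values. $\mathrm{Total}(n,A)$ is the supremum of total values of reachable positions of $\mathrm{AGG}(n,A)$. *)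

(* Defs.v *)
From mathcomp Require Import all_boot.
Set Implicit Arguments. Unset Strict Implicit. Unset Printing Implicit Defensive.

(* A position of AGG(n,A) on indistinguishable cells is the multiset of tile
   values, represented as a sequence (order irrelevant); the number of empty
   cells is n - size p. *)

(* Tiles left alone are
   singleton groups (their value is already in A). *)
Definition agg_step (n : nat) (A : nat -> Prop) (p q : seq nat) : Prop :=
  size p < n /\
  exists groups : seq (seq nat),
    [/\ perm_eq (flatten groups) (1 :: p),
        forall g, g \in groups -> g <> [::],
        forall g, g \in groups -> A (sumn g)
      & q = map sumn groups].

Inductive agg_reachable (n : nat) (A : nat -> Prop) : seq nat -> Prop :=
| agg_reach_init : agg_reachable n A [::]
| agg_reach_step p q : agg_reachable n A p -> agg_step n A p q ->
                       agg_reachable n A q.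

Definition agg_Total_is (n : nat) (A : nat -> Prop) (V : nat) : Prop :=
  (forall p, agg_reachable n A p -> sumn p <= V) /\
  (exists p, agg_reachable n A p /\ sumn p = V).

Definition A_1235 (a : nat) : Prop :=
  a = 1 \/ a = 2 \/ a = 3 \/ exists i, a = 5 * 2 ^ i.

(* Main.v *)
Require Import Defs.
From mathcomp Require Import all_boot.
From mathcomp Require Import zify.

Definition mm (j : nat) : nat :=
  match j with 0 => 1 | 1 => 3 | k.+2 => 5 * 2 ^ k end.
Definition nxt (j : nat) : nat :=
  match j with 0 => 2 | k.+1 => mm k.+2 end.
Fixpoint TT (k : nat) : seq nat :=
  match k with 0 => [::] | k'.+1 => mm k' :: TT k' end.

Lemma sumTT k : (sumn (TT k.+2)).+1 = 5 * 2 ^ k.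
Proof.
elim: k => [|k IH] //=.
move: IH => /= IH. rewrite expnS. lia.
Qed.

Lemma mm_ge1 j : 1 <= mm j.
Proof. case: j => [|[|k]] //=. rewrite muln_gt0 expn_gt0. done. Qed.

Lemma mm_mono j : mm j <= mm j.+1.
Proof. case: j => [|[|k]] //=. rewrite expnS. have := expn_gt0 2 k. lia. Qed.

Lemma F1 j x : A_1235 x -> mm j < x -> nxt j <= x.
Proof.
case=> [->|[->|[->|[i ->]]]]; case: j => [|[|k]] //=; try lia;
  have := expn_gt0 2 i; have := expn_gt0 2 k; try lia.
move=> _ _ H. have H1 : 2 ^ k < 2 ^ i by lia.
rewrite ltn_exp2l // in H1.
have : 2 ^ k.+1 <= 2 ^ i by rewrite leq_exp2l.
lia.
Qed.

Lemma F2 j : sumn (TT j) + mm j < nxt j.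
Proof.
case: j => [|[|k]] //=. have := sumTT k. move=> /= H. rewrite expnS. lia.
Qed.

Lemma sumn_split (s : seq nat) (P Q : pred nat) :
  sumn (filter P s) = sumn (filter (fun x => P x && Q x) s) +
                      sumn (filter (fun x => P x && ~~ Q x) s).
Proof.
elim: s => [|x s IH] //=.
case: (P x); case: (Q x) => /=; rewrite IH; lia.
Qed.

Lemma count_split (s : seq nat) (P Q : pred nat) :
  count P s = count (fun x => P x && Q x) s + count (fun x => P x && ~~ Q x) s.
Proof.
elim: s => [|x s IH] //=.
case: (P x); case: (Q x) => /=; rewrite IH; lia.
Qed.

Lemma sumn_filter_le (s : seq nat) (P : pred nat) c :
  (forall x, P x -> x <= c) -> sumn (filter P s) <= count P s * c.
Proof.
move=> H; elim: s => [|x s IH] //=.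
case Px: (P x) => /=; last by [].
have := H x Px. lia.
Qed.

Definition Dom (n : nat) (X : seq nat) : Prop :=
  size X <= n /\ forall j, j < n -> count (fun x => mm j < x) X <= n - 1 - j.

Lemma small_sum n X : Dom n X -> forall j, j < n ->
  sumn (filter (fun x => ~~ (mm j < x)) X) + count (fun x => mm j < x) X * mm j
  <= (n - j) * mm j + sumn (TT j).
Proof.
move=> [Hs Hc]; elim=> [|j IH] Hj.
- have H1 := sumn_filter_le X (fun x => ~~ (mm 0 < x)) 1.
  have H2 : count (fun x => 1 < x) X + count (fun x => ~~ (1 < x)) X = size X
    := count_predC (fun x => 1 < x) X.
  have : sumn [seq x <- X | ~~ (1 < x)] <= count (fun x => ~~ (1 < x)) X * 1.
    by apply: H1 => x /=; lia.
  rewrite /=. lia.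
- have IH' := IH (ltnW Hj).
  have E1 := sumn_split X (fun x => ~~ (mm j.+1 < x)) (fun x => ~~ (mm j < x)).
  have E2 : [seq x <- X | ~~ (mm j.+1 < x) && ~~ (mm j < x)] =
            [seq x <- X | ~~ (mm j < x)].
    apply: eq_filter => x. have := mm_mono j. case: (ltnP (mm j) x); lia.
  rewrite E2 in E1.
  have E3 := count_split X (fun x => mm j < x) (fun x => mm j.+1 < x).
  have E4 : count (fun x => (mm j < x) && (mm j.+1 < x)) X = count (fun x => mm j.+1 < x) X.
    apply: eq_count => x. have := mm_mono j. case: (ltnP (mm j.+1) x); lia.
  rewrite E4 in E3.
  have E5 : count (fun x => (mm j < x) && ~~ (mm j.+1 < x)) X =
            count (fun x => ~~ (mm j.+1 < x) && ~~ ~~ (mm j < x)) X.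
    apply: eq_count => x /=. rewrite negbK andbC. done.
  have E6 := sumn_filter_le X
    (fun x => ~~ (mm j.+1 < x) && ~~ ~~ (mm j < x)) (mm j.+1).
  have E7 : sumn [seq x <- X | ~~ (mm j.+1 < x) && ~~ ~~ (mm j < x)] <=
     count (fun x => ~~ (mm j.+1 < x) && ~~ ~~ (mm j < x)) X * mm j.+1.
    by apply: E6 => x /andP [] ; lia.
  have Ha := Hc j (ltnW Hj).
  have Hm := mm_mono j.
  rewrite /= -/(TT j).
  set a := count (fun x => mm j < x) X in IH' E3 Ha *.
  set a' := count (fun x => mm j.+1 < x) X in E3 *.
  set b := count (fun x => ~~ (mm j.+1 < x) && ~~ ~~ (mm j < x)) X in E5 E7.
  set sP := sumn [seq x <- X | ~~ (mm j < x)] in IH' E1.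
  set mid := sumn [seq x <- X | ~~ (mm j.+1 < x) && ~~ ~~ (mm j < x)] in E1 E7.
  rewrite E1.
  have Eb : b = a - a' by lia.
  rewrite Eb in E7.
  have Hd : a <= n - j.+1 by lia.
  set mj := mm j in IH' Hm *. set mj1 := mm j.+1 in E7 Hm *.
  set S := sumn (TT j) in IH' *.
  have Ha' : a' <= a by lia.
  have K1 : mid + a' * mj1 <= a * mj1.
    have : (a - a') * mj1 + a' * mj1 = a * mj1 by rewrite -mulnDl subnK.
    lia.
  have K2 : (n - j) * mj = (n - j.+1) * mj + mj by rewrite -mulSnr; congr (_ * _); lia.
  have K3 : (n - j.+1) * mj = (n - j.+1 - a) * mj + a * mj by rewrite -mulnDl subnK.
  have K4 : (n - j.+1) * mj1 = (n - j.+1 - a) * mj1 + a * mj1 by rewrite -mulnDl subnK.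
  have K5 : (n - j.+1 - a) * mj <= (n - j.+1 - a) * mj1 by rewrite leq_mul2l Hm orbT.
  change (sP + mid + a' * mj1 <= (n - j.+1) * mj1 + (mj + S)). lia.
Qed.

Lemma group_ineq j (g : seq nat) : A_1235 (sumn g) ->
  (mm j < sumn g) * nxt j <=
  count (fun x => mm j < x) g * nxt j + sumn (filter (fun x => ~~ (mm j < x)) g).
Proof.
move=> HA.
case Hc: (count (fun x => mm j < x) g) => [|c].
- have Hf : filter (fun x => mm j < x) g = [::].
    apply/eqP; rewrite -size_eq0 size_filter Hc //.
  have := sumn_split g predT (fun x => mm j < x).
  rewrite filter_predT /= Hf /= => E.
  have -> : [seq x <- g | ~~ (mm j < x)] = [seq x <- g | true && ~~ (mm j < x)] by [].
  rewrite -E.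
  case: (ltnP (mm j) (sumn g)) => H /=; last by lia.
  have := F1 j (sumn g) HA H. lia.
- case: (mm j < sumn g) => /=; lia.
Qed.

Lemma groups_ineq j (G : seq (seq nat)) : (forall g, g \in G -> A_1235 (sumn g)) ->
  count (fun x => mm j < x) (map sumn G) * nxt j <=
  count (fun x => mm j < x) (flatten G) * nxt j +
  sumn (filter (fun x => ~~ (mm j < x)) (flatten G)).
Proof.
elim: G => [|g G IH] HG //=.
have H1 := group_ineq j g (HG g (mem_head _ _)).
have H2 := IH (fun g' Hg' => HG g' ltac:(by rewrite inE Hg' orbT)).
rewrite count_cat filter_cat sumn_cat. lia.
Qed.

Lemma size_groups (G : seq (seq nat)) : (forall g, g \in G -> A_1235 (sumn g)) ->
  size G <= size (flatten G).
Proof.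
elim: G => [|g G IH] HG //=.
have H1 := HG g (mem_head _ _).
have H2 := IH (fun g' Hg' => HG g' ltac:(by rewrite inE Hg' orbT)).
rewrite size_cat. clear HG. case: g H1 => [|x g] /=; last lia.
case=> [//|[//|[//|[i]]]]. have := expn_gt0 2 i. lia.
Qed.

Lemma preserve n X (G : seq (seq nat)) : Dom n X -> perm_eq (flatten G) X ->
  (forall g, g \in G -> A_1235 (sumn g)) -> Dom n (map sumn G).
Proof.
move=> HD Hp HG.
have Hs : size (flatten G) = size X by apply: perm_size.
split.
- rewrite size_map. have := size_groups G HG. case: HD. lia.
- move=> j Hj.
  have I1 := groups_ineq j G HG.
  rewrite (permP Hp) (perm_sumn (perm_filter _ Hp)) in I1.
  have I2 := small_sum n X HD j Hj.
  have I3 := F2 j.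
  have Ha := HD.2 j Hj.
  set c := count _ (map sumn G) in I1 *.
  set a := count (fun x => mm j < x) X in I1 I2 Ha.
  set sP := sumn _ in I1 I2.
  set mj := mm j in I2 I3. set nx := nxt j in I1 I3. set S := sumn (TT j) in I2 I3.
  case: (leqP c (n - 1 - j)) => // Hc.
  exfalso.
  have Hk : 1 <= n - j - a by lia.
  have : (n - j) * nx <= c * nx by rewrite leq_mul2r; apply/orP; right; lia.
  have K1 : (n - j) * nx = (n - j - a) * nx + a * nx by rewrite -mulnDl subnK //; lia.
  have K2 : (n - j) * mj = (n - j - a) * mj + a * mj by rewrite -mulnDl subnK //; lia.
  have K3 : (n - j - a) * nx = (n - j - a) * (nx - mj) + (n - j - a) * mj
    by rewrite -mulnDr subnK //; lia.
  have K4 : nx - mj <= (n - j - a) * (nx - mj) by rewrite leq_pmull.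
  lia.
Qed.

Lemma reach_Dom n p0 : agg_reachable n A_1235 p0 -> Dom n p0.
Proof.
elim=> [|p q _ IH [Hsz [G [Hp Hne HA ->]]]].
- by split.
- apply: (preserve n (1 :: p) G) => //.
  split; first by [].
  move=> j Hj /=. have := mm_ge1 j. have := IH.2 j Hj.
  move=> H1 H2; rewrite ltnNge H2 /=; lia.
Qed.

Lemma Dom_sum n p : Dom n.+1 p -> sumn p <= sumn (TT n.+1).
Proof.
move=> HD.
have H1 := small_sum n.+1 p HD n (ltnSn n).
have H2 := HD.2 n (ltnSn n).
have E := sumn_split p predT (fun x => mm n < x).
rewrite filter_predT in E.
have Hf : filter (fun x => true && (mm n < x)) p = [::].
  apply/eqP; rewrite -size_eq0 size_filter.
  rewrite (eq_count (a2 := fun x => mm n < x)) //. lia.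
rewrite Hf /= in E.
rewrite add0n in E. rewrite -E in H1. rewrite /=.
have E'' : n.+1 - n = 1 by lia.
rewrite E'' in H1.
lia.
Qed.

Inductive star (n : nat) : seq nat -> seq nat -> Prop :=
| star_refl p : star n p p
| star_st p q r : agg_step n A_1235 p q -> star n q r -> star n p r.

Lemma star_reach n p q : agg_reachable n A_1235 p -> star n p q -> agg_reachable n A_1235 q.
Proof.
move=> Hp Hs; elim: Hs Hp => // p0 q0 r Hst _ IH Hp.
apply: IH. exact: agg_reach_step Hp Hst.
Qed.

Lemma star_trans n p q r : star n p q -> star n q r -> star n p r.
Proof. by elim=> // p0 q0 r0 H _ IH Hr; apply: star_st H (IH Hr). Qed.

Lemma star_mono n p q : star n p q -> star n.+1 p q.
Proof.
elim=> [p0|p0 q0 r0 [Hs H] _ IH]; first exact: star_refl.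
apply: star_st IH. split; first by apply: ltnW. exact: H.
Qed.

Lemma star_lift n x p q : A_1235 x -> star n p q -> star n.+1 (x :: p) (x :: q).
Proof.
move=> Hx; elim=> [p0|p0 q0 r0 [Hs [G [Hp Hne HA ->]]] _ IH]; first exact: star_refl.
apply: star_st IH. split; first by [].
exists ([:: x] :: G). split.
- rewrite /=. apply: (@perm_trans _ (x :: 1 :: p0)); first by rewrite perm_cons.
  by apply/permP => P /=; rewrite addnCA.
- by move=> g; rewrite in_cons => /orP [/eqP ->|/Hne].
- by move=> g; rewrite in_cons => /orP [/eqP -> /=|/HA]; rewrite ?addn0.
by rewrite /= addn0.
Qed.

Lemma step1 n p q (G : seq (seq nat)) : size p < n -> perm_eq (flatten G) (1 :: p) ->
  (forall g, g \in G -> A_1235 (sumn g)) -> q = map sumn G -> star n p q.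
Proof.
move=> Hs Hp HA Hq. apply: star_st (star_refl _ _). split => //.
exists G; split => // g Hg Hn. have := HA g Hg. rewrite Hn /=.
case=> [//|[//|[//|[i]]]]. have := expn_gt0 2 i. lia.
Qed.

Arguments star_trans {n p q r}.
Arguments star_mono {n p q}.
Arguments star_lift {n x p q}.
Arguments star_reach {n p q}.
Lemma size_TT k : size (TT k) = k.
Proof. by elim: k => //= k ->. Qed.
Lemma A1 : A_1235 1. Proof. by left. Qed.
Lemma A2 : A_1235 2. Proof. by right; left. Qed.
Lemma A3 : A_1235 3. Proof. by right; right; left. Qed.

Lemma constr k : star k.+2 [::] (TT k.+2).
Proof.
elim: k => [|k IH].
- apply: (star_trans (step1 2 [::] [:: 1] [:: [:: 1]] _ _ _ _)) => //;
    first by move=> g; rewrite inE => /eqP ->; exact: A1.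
  apply: (star_trans (step1 2 [:: 1] [:: 2] [:: [:: 1; 1]] _ _ _ _)) => //;
    first by move=> g; rewrite inE => /eqP ->; exact: A2.
  apply: (star_trans (step1 2 [:: 2] [:: 3] [:: [:: 1; 2]] _ _ _ _)) => //;
    first by move=> g; rewrite inE => /eqP ->; exact: A3.
  apply: (star_trans (step1 2 [:: 3] [:: 3; 1] [:: [:: 3]; [:: 1]] _ _ _ _)) => //;
    last exact: star_refl.
  move=> g; rewrite !inE => /orP [/eqP ->|/eqP ->]; [exact: A3|exact: A1].
- apply: (star_trans (star_mono IH)).
  have HA : A_1235 (mm k.+2) by right; right; right; exists k.
  apply: (star_trans (step1 k.+3 (TT k.+2) [:: mm k.+2] [:: 1 :: TT k.+2] _ _ _ _)).
  + by rewrite size_TT.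
  + by rewrite /= cats0.
  + move=> g; rewrite inE => /eqP ->. rewrite /= -/(TT k).
    have := sumTT k. rewrite /= => E. rewrite add1n E. exact: HA.
  + by rewrite /= -/(TT k) add1n sumTT.
  + exact: (star_lift HA IH).
Qed.

Theorem mainTheorem14 (n : nat) : 1 <= n ->
  agg_Total_is n A_1235 ((5 * 2 ^ n) %/ 4 - 1).
Proof.
case: n => [//|n] _.
have Hv : (5 * 2 ^ n.+1) %/ 4 - 1 = sumn (TT n.+1).
  case: n => [//|k].
  have := sumTT k. rewrite !expnS.
  have -> : 5 * (2 * (2 * 2 ^ k)) = (5 * 2 ^ k) * 4 by lia.
  rewrite mulnK //. lia.
rewrite Hv. split.
- move=> p Hp. apply: Dom_sum. exact: reach_Dom Hp.
- exists (TT n.+1); split => //.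
  apply: (star_reach (agg_reach_init _ _)).
  case: n {Hv} => [|k].
  + apply: (step1 1 [::] [:: 1] [:: [:: 1]]) => //.
    by move=> g; rewrite inE => /eqP ->; exact: A1.
  + exact: constr.
Qed.
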